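(* Let $q$ be a prime power, $k\ge1$, $n=4k$, and $\delta\in\mathbb{F}_{q^n}$. Let $$g(x)=\sum_{i=1}^{k}x^{q^{2(i-1)}+q^{2(i-1)+2k}}.$$ Then for $a\in\mathbb{F}_q$, $a\neq0$, the polynomial $f(x)=g(x^q-x+\delta)+ax$ permutes $\mathbb{F}_{q^n}$ if and only if $\mathrm{Tr}(\delta)\neq a$.
   Context: $\mathrm{Tr}$ denotes the trace function from $\mathbb{F}_{q^n}$ to $\mathbb{F}_q$, $\mathrm{Tr}(x)=x+x^q+\cdots+x^{q^{n-1}}$. A polynomial permutes $\mathbb{F}_{q^n}$ if it induces a bijection of $\mathbb{F}_{q^n}$. *)

(* Defs.v *)
From mathcomp Require Import all_boot all_algebra all_field.
Set Implicit Arguments. Unset Strict Implicit. Unset Printing Implicit Defensive.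
Import GRing.Theory.
Local Open Scope ring_scope.

Definition trq (F : finFieldType) (q n : nat) (x : F) : F :=
  \sum_(i < n) x ^+ (q ^ i).

(* g(x) = sum_{i=1}^{k} x^{q^{2(i-1)} + q^{2(i-1)+2k}}, reindexed with j = i-1. *)
Definition gpoly (F : finFieldType) (q k : nat) (x : F) : F :=
  \sum_(j < k) x ^+ (q ^ (2 * j) + q ^ (2 * j + 2 * k)).

(* Main.v *)
Require Import Defs.
From mathcomp Require Import all_boot all_algebra all_field.
From mathcomp Require Import zify ring.
Set Implicit Arguments. Unset Strict Implicit.
Import GRing.Theory.
Local Open Scope ring_scope.

Lemma frob_add (F : finFieldType) (p m : nat) (x y : F) :
  p \in [pchar F] -> (x + y) ^+ (p ^ m) = x ^+ (p ^ m) + y ^+ (p ^ m).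
Proof.
move=> hp; elim: m => [|m IH]; first by rewrite expn0 !expr1.
rewrite expnSr !exprM IH -!(pFrobenius_autE hp).
by apply: pFrobenius_autD_comm; rewrite /GRing.comm mulrC.
Qed.


Lemma powD (F : finFieldType) (q : nat)
  (Hadd : forall x y : F, (x + y) ^+ q = x ^+ q + y ^+ q) i (x y : F) :
  (x + y) ^+ (q ^ i) = x ^+ (q ^ i) + y ^+ (q ^ i).
Proof.
elim: i => [|i IH]; first by rewrite expn0 !expr1.
by rewrite expnSr !exprM IH Hadd.
Qed.

Lemma pow0 (F : finFieldType) (q : nat) (hq : (0 < q)%N) i :
  (0 : F) ^+ (q ^ i) = 0.
Proof. by rewrite expr0n expn_eq0 eqn0Ngt hq. Qed.

Lemma powN (F : finFieldType) (q : nat) (hq : (0 < q)%N)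
  (Hadd : forall x y : F, (x + y) ^+ q = x ^+ q + y ^+ q) i (x : F) :
  (- x) ^+ (q ^ i) = - x ^+ (q ^ i).
Proof.
have := powD Hadd i x (- x); rewrite subrr pow0 // => /esym/eqP.
by rewrite addr_eq0 => /eqP ->; rewrite opprK.
Qed.

Lemma powB (F : finFieldType) (q : nat) (hq : (0 < q)%N)
  (Hadd : forall x y : F, (x + y) ^+ q = x ^+ q + y ^+ q) i (x y : F) :
  (x - y) ^+ (q ^ i) = x ^+ (q ^ i) - y ^+ (q ^ i).
Proof. by rewrite powD // powN. Qed.

Lemma powS (F : finFieldType) (q : nat) (hq : (0 < q)%N)
  (Hadd : forall x y : F, (x + y) ^+ q = x ^+ q + y ^+ q) i (I : Type) (r : seq I) (P : pred I) (G : I -> F) :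
  (\sum_(j <- r | P j) G j) ^+ (q ^ i) = \sum_(j <- r | P j) (G j) ^+ (q ^ i).
Proof.
by apply: (big_morph (fun x : F => x ^+ (q ^ i)) (powD Hadd i) (pow0 F hq i)).
Qed.

Lemma powMn (F : finFieldType) (q : nat) (hq : (0 < q)%N)
  (Hadd : forall x y : F, (x + y) ^+ q = x ^+ q + y ^+ q) i (x : F) n :
  (x *+ n) ^+ (q ^ i) = x ^+ (q ^ i) *+ n.
Proof.
elim: n => [|n IH]; first by rewrite !mulr0n pow0.
by rewrite !mulrS powD // IH.
Qed.

Lemma powpow (F : finFieldType) (q i j : nat) (x : F) :
  (x ^+ (q ^ i)) ^+ (q ^ j) = x ^+ (q ^ (i + j)).
Proof. by rewrite -exprM -expnD. Qed.

Lemma cyc_shift (F : finFieldType) (f : nat -> F) k :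
  f k = f 0%N -> \sum_(j < k) f j.+1 = \sum_(j < k) f j.
Proof.
case: k => [|k] h; first by rewrite !big_ord0.
rewrite big_ord_recr big_ord_recl /= h addrC; congr (_ + _); apply: eq_bigr => i _; rewrite /bump add1n.
Qed.

Lemma sum_pair (F : finFieldType) (G : nat -> F) n :
  \sum_(i < 2 * n) G i = \sum_(j < n) (G (2 * j)%N + G (2 * j).+1).
Proof.
rewrite -(big_mkord (fun _ => true) G) -(big_mkord (fun _ => true) (fun j => G (2 * j)%N + G (2 * j).+1)); elim: n => [|n IH]; first by rewrite muln0 !big_geq.
rewrite (_ : (2 * n.+1 = (2 * n).+1.+1)%N); last by lia.
by rewrite !big_nat_recr //= IH addrA.
Qed.

Lemma sum_split (F : finFieldType) (G : nat -> F) n :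
  \sum_(i < n + n) G i = \sum_(i < n) G i + \sum_(i < n) G (n + i)%N.
Proof. by rewrite big_split_ord. Qed.

Lemma im_ker (F : finFieldType) (M : F -> F) :
  (forall x y, M (x - y) = M x - M y) ->
  (#|F| <= #|[set M x | x in F]| * #|[set x | M x == 0%R]|)%N.
Proof.
move=> hM.
pose r y := odflt (0 : F) [pick z | M z == y].
have hr : forall x, M (r (M x)) = M x.
  move=> x; rewrite /r; case: pickP => [z /eqP //|/(_ x)]; by rewrite eqxx.
pose h x := (M x, x - r (M x)).
have hinj : injective h.
  move=> x x' [e1 e2]; by move: e2; rewrite e1 => /subIr.
rewrite -cardsT -(card_imset _ hinj) -cardsX; apply: subset_leq_card.
apply/subsetP => _ /imsetP [x _ ->]; rewrite /h in_setX; apply/andP; split.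
  by apply/imsetP; exists x.
by rewrite inE hM hr subrr.
Qed.
Definition linq (F : finFieldType) (Q m : nat) (c : nat -> F) (x : F) :=
  \sum_(i < m) c i * x ^+ (Q ^ i).

Lemma root_bound (F : finFieldType) (Q m : nat) (c : nat -> F) :
  (1 < Q)%N -> (0 < m)%N -> c m.-1 != 0 ->
  (#|[set x : F | linq Q m c x == 0%R]| <= Q ^ m.-1)%N.
Proof.
move=> hQ hm hc.
pose p : {poly F} := \sum_(i < m) c i *: 'X^(Q ^ i).
have hp : forall x, p.[x] = \sum_(i < m) c i * x ^+ (Q ^ i).
  by move=> x; rewrite horner_sum; apply: eq_bigr => i _; rewrite hornerZ hornerXn.
have cp : forall j, p`_j = \sum_(i < m) c i * (j == Q ^ i)%N%:R.
  by move=> j; rewrite coef_sum; apply: eq_bigr => i _; rewrite coefZ coefXn.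
have hm1 : (m.-1 < m)%N by rewrite prednK.
have p0 : p != 0.
  apply/negP => /eqP h0; move: hc; rewrite -[c m.-1]mulr1.
  have := cp (Q ^ m.-1)%N; rewrite h0 coef0 (bigD1 (Ordinal hm1)) //= eqxx big1 ?addr0.
    by move=> <-; rewrite eqxx.
  move=> i hi; rewrite eqn_exp2l // (_ : (m.-1 == i) = false) ?mulr0 //.
  by apply/negbTE; apply: contra hi => /eqP e; apply/eqP/val_inj; rewrite /= e.
have sp : (size p <= (Q ^ m.-1).+1)%N.
  apply/leq_sizeP => j hj; rewrite cp big1 // => i _.
  rewrite (_ : (j == Q ^ i)%N = false) ?mulr0 //; apply/negbTE.
  have : (Q ^ i <= Q ^ m.-1)%N by apply: leq_pexp2l; [lia | have := ltn_ord i; lia].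
  by move=> h; apply/eqP => e; move: hj h; rewrite e; lia.
rewrite cardE.
have := @max_poly_roots _ p (enum [set x : F | linq Q m c x == 0%R]) p0.
rewrite enum_uniq => /(_ _ isT) h.
have : (size (enum [set x : F | linq Q m c x == 0%R]) < size p)%N.
  apply: h; apply/allP => x; by rewrite mem_enum inE /root hp.
by move=> /leq_trans /(_ sp); rewrite ltnS.
Qed.

Definition Aop (F : finFieldType) (q k : nat) (y : F) : F :=
  \sum_(j < k) (y ^+ (q ^ (2 * j)) + y ^+ (q ^ (2 * j + 2 * k))).

Lemma powE (F : finFieldType) (q a b : nat) (y : F) : (a = b)%N -> y ^+ (q ^ a) = y ^+ (q ^ b).
Proof. by move=> ->. Qed.
Arguments powE {F q} a b {y}.

Lemma gq2 (F : finFieldType) (q k : nat) (hq : (0 < q)%N)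
  (Hadd : forall x y : F, (x + y) ^+ q = x ^+ q + y ^+ q)
  (hN : forall x : F, x ^+ (q ^ (4 * k)) = x) (z : F) :
  (gpoly q k z) ^+ (q ^ 2) = gpoly q k z.
Proof.
rewrite /gpoly powS //.
have e : forall j, (z ^+ (q ^ (2 * j) + q ^ (2 * j + 2 * k))) ^+ (q ^ 2)
    = z ^+ (q ^ (2 * j.+1) + q ^ (2 * j.+1 + 2 * k)).
  move=> j; rewrite !exprD exprMn !powpow.
  rewrite (powE (2 * j + 2) (2 * j.+1)); last lia.
  by rewrite (powE (2 * j + 2 * k + 2) (2 * j.+1 + 2 * k)); last lia.
under eq_bigr => j _ do rewrite e.
have := @cyc_shift F (fun j => z ^+ (q ^ (2 * j) + q ^ (2 * j + 2 * k))) k; apply.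
rewrite !exprD (powE (2 * k + 2 * k) (4 * k)); last by lia.
by rewrite hN muln0 expn0 expr1 add0n mulrC.
Qed.

Lemma gshift (F : finFieldType) (q k : nat) (hq : (0 < q)%N)
  (Hadd : forall x y : F, (x + y) ^+ q = x ^+ q + y ^+ q) (w y : F) :
  w ^+ (q ^ 2) = w ->
  gpoly q k (y + w) = gpoly q k y + w * Aop q k y + w ^+ 2 *+ k.
Proof.
move=> hw0.
have hw : forall j, w ^+ (q ^ (2 * j)) = w.
  elim=> [|j IH]; first by rewrite muln0 expn0 expr1.
  rewrite (powE (2 * j.+1) (2 * j + 2)); last lia.
  by rewrite -powpow IH hw0.
have hw2 : forall j, w ^+ (q ^ (2 * j + 2 * k)) = w by move=> j; rewrite -mulnDr hw.
have -> : w ^+ 2 *+ k = \sum_(j < k) w ^+ 2 by rewrite sumr_const card_ord.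
rewrite /gpoly /Aop mulr_sumr -!big_split /=; apply: eq_bigr => j _.
rewrite !exprD !powD // hw hw2; ring.
Qed.

Lemma Atr (F : finFieldType) (q k : nat) (hq : (0 < q)%N)
  (Hadd : forall x y : F, (x + y) ^+ q = x ^+ q + y ^+ q) (y : F) :
  Aop q k y + (Aop q k y) ^+ q = trq q (4 * k) y.
Proof.
have -> : (Aop q k y) ^+ q = (Aop q k y) ^+ (q ^ 1) by rewrite expn1.
rewrite /Aop powS // /trq.
rewrite (_ : (4 * k = 2 * k + 2 * k)%N); last by lia.
rewrite (sum_split (fun i => y ^+ (q ^ i))) (sum_pair (fun i => y ^+ (q ^ i))).
rewrite (sum_pair (fun i => y ^+ (q ^ (2 * k + i)))) -!big_split; apply: eq_bigr => j _ /=.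
rewrite powD // !powpow.
rewrite (powE (2 * k + 2 * j) (2 * j + 2 * k)); last lia.
rewrite (powE (2 * k + (2 * j).+1) (2 * j + 2 * k + 1)); last lia.
rewrite (powE (2 * j).+1 (2 * j + 1)); last lia.
ring.
Qed.

Lemma frobpow (F : finFieldType) (q i : nat) (x : F) : (x ^+ q) ^+ (q ^ i) = x ^+ (q ^ i.+1).
Proof. by rewrite -exprM -expnS. Qed.

Lemma tr_frob (F : finFieldType) (q N : nat) (hq : (0 < q)%N)
  (Hadd : forall x y : F, (x + y) ^+ q = x ^+ q + y ^+ q)
  (hN : forall x : F, x ^+ (q ^ N) = x) (x : F) :
  trq q N (x ^+ q - x) = 0.
Proof.
rewrite /trq; under eq_bigr => i _ do rewrite powB // frobpow.
rewrite sumrB (@cyc_shift F (fun i => x ^+ (q ^ i)) N) ?subrr // hN expn0 expr1.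
Qed.

Lemma tr_add (F : finFieldType) (q N : nat)
  (Hadd : forall x y : F, (x + y) ^+ q = x ^+ q + y ^+ q) (x y : F) :
  trq q N (x + y) = trq q N x + trq q N y.
Proof. by rewrite /trq -big_split; apply: eq_bigr => i _; rewrite powD. Qed.

Lemma Aop_add (F : finFieldType) (q k : nat)
  (Hadd : forall x y : F, (x + y) ^+ q = x ^+ q + y ^+ q) (x y : F) :
  Aop q k (x + y) = Aop q k x + Aop q k y.
Proof. by rewrite /Aop -big_split; apply: eq_bigr => i _ /=; rewrite !powD //; ring. Qed.

Lemma Aop_opp (F : finFieldType) (q k : nat) (hq : (0 < q)%N)
  (Hadd : forall x y : F, (x + y) ^+ q = x ^+ q + y ^+ q) (x : F) :
  Aop q k (- x) = - Aop q k x.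
Proof. by rewrite /Aop -sumrN; apply: eq_bigr => i _ /=; rewrite !powN //; ring. Qed.

Lemma Aop_frob (F : finFieldType) (q k : nat) (hq : (0 < q)%N)
  (Hadd : forall x y : F, (x + y) ^+ q = x ^+ q + y ^+ q) (x : F) :
  Aop q k (x ^+ q) = (Aop q k x) ^+ q.
Proof.
have -> : (Aop q k x) ^+ q = (Aop q k x) ^+ (q ^ 1) by rewrite expn1.
rewrite /Aop powS //; apply: eq_bigr => i _.
by rewrite powD // !frobpow !powpow !addn1.
Qed.

Lemma Aq2 (F : finFieldType) (q k : nat) (hq : (0 < q)%N)
  (Hadd : forall x y : F, (x + y) ^+ q = x ^+ q + y ^+ q)
  (hN : forall x : F, x ^+ (q ^ (4 * k)) = x) (z : F) :
  (Aop q k z) ^+ (q ^ 2) = Aop q k z.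
Proof.
rewrite /Aop powS //.
have e : forall j, (z ^+ (q ^ (2 * j)) + z ^+ (q ^ (2 * j + 2 * k))) ^+ (q ^ 2)
    = z ^+ (q ^ (2 * j.+1)) + z ^+ (q ^ (2 * j.+1 + 2 * k)).
  move=> j; rewrite powD // !powpow.
  rewrite (powE (2 * j + 2) (2 * j.+1)); last lia.
  by rewrite (powE (2 * j + 2 * k + 2) (2 * j.+1 + 2 * k)); last lia.
under eq_bigr => j _ do rewrite e.
have := @cyc_shift F (fun j => z ^+ (q ^ (2 * j)) + z ^+ (q ^ (2 * j + 2 * k))) k; apply.
rewrite (powE (2 * k + 2 * k) (4 * k)); last by lia.
by rewrite hN muln0 expn0 expr1 add0n addrC.
Qed.

Definition cM (F : finFieldType) (i : nat) : F := if odd i then 1 else -1.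

Lemma AopM (F : finFieldType) (q k : nat) (hq : (0 < q)%N)
  (Hadd : forall x y : F, (x + y) ^+ q = x ^+ q + y ^+ q) (x : F) :
  (Aop q k x) ^+ q - Aop q k x = linq q (4 * k) (@cM F) x.
Proof.
rewrite -Aop_frob // /linq.
rewrite (_ : (4 * k = 2 * k + 2 * k)%N); last by lia.
rewrite (sum_split (fun i => cM F i * x ^+ (q ^ i))) (sum_pair (fun i => cM F i * x ^+ (q ^ i))).
rewrite (sum_pair (fun i => cM F (2 * k + i) * x ^+ (q ^ (2 * k + i)))) -!big_split.
rewrite /Aop -sumrB; apply: eq_bigr => j _ /=.
have E : forall n, odd (2 * n) = false by move=> n; rewrite oddM andFb.
rewrite /cM !oddD !oddS !E !frobpow /=.
rewrite (powE (2 * k + 2 * j) (2 * j + 2 * k)); last lia.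
rewrite (powE (2 * k + (2 * j).+1) (2 * j + 2 * k).+1); last lia.
rewrite !addbF !addbb /=. ring.
Qed.

Lemma forward (F : finFieldType) (q k : nat) (hq1 : (1 < q)%N)
  (Hadd : forall x y : F, (x + y) ^+ q = x ^+ q + y ^+ q)
  (hN : forall x : F, x ^+ (q ^ (4 * k)) = x) (delta a : F)
  (haq : a ^+ q = a) (ha0 : a != 0) (htr : trq q (4 * k) delta != a) :
  injective (fun x : F => gpoly q k (x ^+ q - x + delta) + a * x).
Proof.
have hq : (0 < q)%N by lia.
have HN : forall x : F, (- x) ^+ q = - x ^+ q.
  by move=> x; have := powN hq Hadd 1 x; rewrite expn1.
have HMn : forall (x : F) n, (x *+ n) ^+ q = x ^+ q *+ n.
  by move=> x n; have := powMn hq Hadd 1 x n; rewrite expn1.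
have HA : forall x : F, (Aop q k x) ^+ q = trq q (4 * k) x - Aop q k x.
  by move=> x; rewrite -(Atr k hq Hadd x) addrC addKr.
move=> x1 x2 /= e.
pose u := x2 - x1.
have hx2 : x2 = x1 + u by rewrite /u addrC subrK.
pose y := x1 ^+ q - x1 + delta. pose w := u ^+ q - u.
have hy2 : x2 ^+ q - x2 + delta = y + w by rewrite hx2 Hadd /y /w; ring.
rewrite hy2 -/y in e.
have ha2 : a ^+ (q ^ 2) = a by rewrite expnS expn1 exprM haq haq.
have hau : a * u = gpoly q k y - gpoly q k (y + w).
  have -> : gpoly q k y = gpoly q k (y + w) + a * x2 - a * x1 by rewrite -e addrK.
  rewrite /u; ring.
have hu2 : u ^+ (q ^ 2) = u.
  by apply: (mulfI ha0); rewrite -{1}ha2 -exprMn hau powB // !(gq2 hq Hadd hN).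
have hw2 : w ^+ (q ^ 2) = w.
  by rewrite /w powB // frobpow -(@powpow F q 2 1 u) hu2 expn1.
have E : w * Aop q k y + w ^+ 2 *+ k + a * u = 0.
  by rewrite hau (gshift k hq Hadd y hw2); ring.
have hwq : w ^+ q = - w by rewrite /w Hadd HN -{2}(expn1 q) frobpow hu2 /w; ring.
have hT : trq q (4 * k) y = trq q (4 * k) delta.
  by rewrite /y (@tr_add _ _ _ Hadd (x1 ^+ q - x1)) (tr_frob hq Hadd hN) add0r.
have E' := congr1 (fun t => t ^+ q) E; move: E' => /=.
rewrite expr0n (_ : (q == 0)%N = false); last by lia.
rewrite !Hadd !exprMn HMn -exprM mulnC exprM hwq HA hT haq => E'.
have hw0 : w * (a - trq q (4 * k) delta) = 0.
  have -> : w * (a - trq q (4 * k) delta) =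
     ((- w) * (trq q (4 * k) delta - Aop q k y) + (- w) ^+ 2 *+ k + a * u ^+ q)
     - (w * Aop q k y + w ^+ 2 *+ k + a * u) by rewrite /w; ring.
  by rewrite E' E subrr.
have htr2 : (a - trq q (4 * k) delta == 0) = false by rewrite subr_eq0 eq_sym (negbTE htr).
move: hw0 => /eqP; rewrite mulf_eq0 htr2 orbF => /eqP w0.
move: E; rewrite w0 expr0n /= mul0rn mul0r !add0r => /eqP.
by rewrite mulf_eq0 (negbTE ha0) /= hx2 => /eqP ->; rewrite addr0.
Qed.

Lemma backward (F : finFieldType) (q k : nat) (hq1 : (1 < q)%N) (hk : (1 <= k)%N)
  (Hadd : forall x y : F, (x + y) ^+ q = x ^+ q + y ^+ q)
  (hF : #|F| = (q ^ (4 * k))%N)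
  (hN : forall x : F, x ^+ (q ^ (4 * k)) = x) (delta a : F)
  (haq : a ^+ q = a) (ha0 : a != 0) (htr : trq q (4 * k) delta = a) :
  ~ injective (fun x : F => gpoly q k (x ^+ q - x + delta) + a * x).
Proof.
have hq : (0 < q)%N by lia.
have HN : forall x : F, (- x) ^+ q = - x ^+ q.
  by move=> x; have := powN hq Hadd 1 x; rewrite expn1.
have HMn : forall (x : F) n, (x *+ n) ^+ q = x ^+ q *+ n.
  by move=> x n; have := powMn hq Hadd 1 x n; rewrite expn1.
pose M := linq q (4 * k) (@cM F).
pose S := [set x | M x == 0].
have hS : (#|S| <= q ^ (4 * k).-1)%N.
  apply: root_bound => //; first by lia.
  rewrite /cM (_ : (4 * k).-1 = (2 * (2 * k - 1)).+1)%N; last by lia.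
  by rewrite oddS oddM /= oner_eq0.
have hlt : (q ^ (4 * k).-1 < q ^ (4 * k))%N by rewrite ltn_exp2l //; lia.
have [x0 hx0] : exists x0, M x0 != 0.
  case: (pickP (fun x => M x != 0)) => [x hx | h]; first by exists x.
  exfalso; have : #|S| = #|F|.
    rewrite -cardsT; apply: eq_card => x; rewrite !inE; have := h x; by move/negbFE.
  by move: hS hlt; rewrite hF; lia.
pose u := Aop q k x0.
have hu2 : u ^+ (q ^ 2) = u by apply: Aq2.
pose w := u ^+ q - u.
have hwM : w = M x0 by rewrite /w /u /M AopM.
have hw0 : w != 0 by rewrite hwM.
have hwq : w ^+ q = - w by rewrite /w Hadd HN -{2}(expn1 q) frobpow hu2 /w; ring.
have huq : u ^+ q = u + w by rewrite /w; ring.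
have hw2 : w ^+ (q ^ 2) = w by rewrite /w powB // frobpow -(@powpow F q 2 1 u) hu2 expn1.
pose R := - (w ^+ 2 *+ k + a * u) / w.
have hR : R + R ^+ q = a.
  rewrite /R exprMn exprVn HN Hadd HMn !exprMn haq hwq huq.
  by field; rewrite oppr_eq0 hw0.
have Mlin : forall x y, M (x - y) = M x - M y.
  move=> x y; rewrite /M -!AopM // Aop_add // Aop_opp // Hadd HN; ring.
pose Im := [set M x | x in F].
pose Z := [set s : F | linq q 2 (fun _ => 1) s == 0].
have hZ : (#|Z| <= q)%N by have := @root_bound F q 2 (fun _ => 1) hq1 isT (oner_neq0 _); rewrite expn1.
have linq2 : forall s : F, linq q 2 (fun _ => 1) s = s + s ^+ q.
  by move=> s; rewrite /linq !big_ord_recr big_ord0 /= expn0 expn1 expr1 !mul1r add0r.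
have hIm : (q <= #|Im|)%N.
  have := im_ker Mlin; rewrite -/Im -/S hF => h.
  have h2 : (q ^ (4 * k) <= #|Im| * q ^ (4 * k).-1)%N.
    by apply: (leq_trans h); apply: leq_mul.
  have e4 : (q ^ (4 * k) = q * q ^ (4 * k).-1)%N by rewrite -expnS prednK //; lia.
  by move: h2; rewrite e4 leq_pmul2r // expn_gt0 hq.
have sImZ : Im \subset Z.
  apply/subsetP => _ /imsetP [x _ ->]; rewrite inE linq2 /M -AopM // Hadd HN.
  have hh : forall z : F, (z ^+ q) ^+ q = z ^+ (q ^ 2) by move=> z; rewrite -exprM expnS expn1.
  by rewrite hh (Aq2 hq Hadd hN); apply/eqP; ring.
have sZIm : Z \subset Im.
  have := subset_leqif_card sImZ => -[_ <-]; apply/eqP; apply/anti_leq.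
  rewrite (subset_leq_card sImZ) /=; exact: leq_trans hZ hIm.
pose t := R - Aop q k delta.
have htZ : t \in Z.
  rewrite inE linq2 /t Hadd HN; apply/eqP.
  have := Atr k hq Hadd delta; rewrite htr => hd.
  rewrite -[RHS](subrr a); rewrite -{1}hR -{1}hd; ring.
have [x _ hx] : exists2 x, x \in F & t = M x.
  by apply/imsetP; exact: (subsetP sZIm).
(* x and x + u collide *)
pose y := x ^+ q - x + delta.
have hAy : Aop q k y = R.
  rewrite /y !Aop_add // Aop_opp // Aop_frob //.
  have := AopM k hq Hadd x; rewrite -/M -hx /t => e.
  have -> : Aop q k x ^+ q = R - Aop q k delta + Aop q k x by rewrite -e; ring.
  ring.
move=> inj.
have : x + u = x.
  apply: inj => /=.
  have -> : (x + u) ^+ q - (x + u) + delta = y + w by rewrite Hadd /y /w; ring.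
  rewrite (gshift k hq Hadd y hw2) hAy /R; by field.
move=> /(congr1 (fun z => z - x)) /=; rewrite subrr addrC addKr => u0.
by move: hw0; rewrite /w u0 expr0n (_ : (q == 0)%N = false) ?subrr ?eqxx //; lia.
Qed.

Theorem mainTheorem8 (F : finFieldType) (q k : nat)
  (hq : exists p m : nat, [/\ prime p, (0 < m)%N & q = (p ^ m)%N])
  (hk : (1 <= k)%N) (hF : #|F| = (q ^ (4 * k))%N)
  (delta a : F) (haq : a ^+ q = a) (ha0 : a != 0) :
  bijective (fun x : F => gpoly q k (x ^+ q - x + delta) + a * x)
  <-> trq q (4 * k) delta != a.
Proof.
case: hq => p [m [pp m0 qe]].
have hq1 : (1 < q)%N by rewrite qe (_ : 1 = p ^ 0)%N // ltn_exp2l ?prime_gt1.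
have hchar : p \in [pchar F].
  apply: card_finPcharP pp; by rewrite hF qe -expnM.
have Hadd : forall x y : F, (x + y) ^+ q = x ^+ q + y ^+ q.
  by move=> x y; rewrite qe; exact: frob_add.
have hN : forall x : F, x ^+ (q ^ (4 * k)) = x by move=> x; rewrite -hF expf_card.
split.
  move=> hb; apply/negP => /eqP htr.
  exact: (backward hq1 hk Hadd hF hN haq ha0 htr (bij_inj hb)).
by move=> htr; apply: injF_bij; exact: forward.
Qed.
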